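(* Assume the setting described in the context, and let $K\in\mathbb{N}$ and $\omega\in\Omega$. For every $d\in\mathbb{N}$, $\varepsilon\in(0,1)$ let $f_\varepsilon\in C(\mathbb{R},\mathbb{R})$ and $\Phi_{f_\varepsilon},\Phi_{g^d_\varepsilon}\in\mathbf{N}$ satisfy $\mathcal{R}(\Phi_{f_\varepsilon})=f_\varepsilon$ and $\mathcal{R}(\Phi_{g^d_\varepsilon})=g^d_\varepsilon$. For every $d\in\mathbb{N}$, $\varepsilon\in(0,1)$ let $U^{d,\theta,K,\varepsilon}_{n,m}\colon[0,T]\times\mathbb{R}^d\times\Omega\to\mathbb{R}$, $\theta\in\Theta$, $n,m\in\mathbb{Z}$, satisfy for all $\theta\in\Theta$, $n\in\mathbb{N}_0$, $m\in\mathbb{N}$, $t\in[0,T]$, $x\in\mathbb{R}^d$ $$U^{d,\theta,K,\varepsilon}_{n,m}(t,x)=\frac{\mathbb{1}_{\mathbb{N}}(n)}{m^n}\sum_{i=1}^{m^n}g^d_\varepsilon\big(X^{d,(\theta,0,-i),K,\varepsilon,t,x}_T\big)+\sum_{\ell=0}^{n-1}\frac{T-t}{m^{n-\ell}}\sum_{i=1}^{m^{n-\ell}}\Big(f_\varepsilon\circ U^{d,(\theta,\ell,i),K,\varepsilon}_{\ell,m}-\mathbb{1}_{\mathbb{N}}(\ell)\,f_\varepsilon\circ U^{d,(\theta,-\ell,i),K,\varepsilon}_{\ell-1,m}\Big)\Big(\mathfrak{T}^{(\theta,\ell,i)}_t,X^{d,(\theta,\ell,i),K,\varepsilon,t,x}_{\mathfrak{T}^{(\theta,\ell,i)}_t}\Big).$$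 Let $(c_{d,\varepsilon})_{d\in\mathbb{N},\varepsilon\in(0,1)}\subseteq\mathbb{R}$ satisfy $c_{d,\varepsilon}\ge2d+|||\mathcal{D}(\Phi_{f_\varepsilon})|||+|||\mathcal{D}(\Phi_{g^d_\varepsilon})|||+|||\mathcal{D}(\Phi_{\beta^d_\varepsilon})|||+|||\mathcal{D}(\Phi_{\sigma^d_\varepsilon,0})|||+|||\mathcal{D}(\Phi_{F^d_\varepsilon,0})|||$. Then for all $m\in\mathbb{N}$, $n\in\mathbb{N}_0$, $d\in\mathbb{N}$, $\varepsilon\in(0,1)$ there exists $(\Phi^{d,\theta,K,\varepsilon}_{n,m,t})_{t\in[0,T],\theta\in\Theta}\subseteq\mathbf{N}$ such that: (i) $\mathcal{D}(\Phi^{d,\theta_1,K,\varepsilon}_{n,m,t_1})=\mathcal{D}(\Phi^{d,\theta_2,K,\varepsilon}_{n,m,t_2})$ for all $t_1,t_2\in[0,T]$, $\theta_1,\theta_2\in\Theta$; (ii) for all $t\in[0,T]$, $\theta\in\Theta$: $\dim(\mathcal{D}(\Phi^{d,\theta,K,\varepsilon}_{n,m,t}))=(n+1)\big[K\big(\max\{\dim(\mathcal{D}(\Phi_{\beta^d_\varepsilon})),\dim(\mathcal{D}(\Phi_{\sigma^d_\varepsilon,0})),\dim(\mathcal{D}(\Phi_{F^d_\varepsilon,0}))\}-1\big)+1\big]+n(\dim(\mathcal{D}(\Phi_{f_\varepsilon}))-2)+\dim(\mathcal{D}(\Phi_{g^d_\varepsilon}))-1$; (iii) for all $t\in[0,T]$,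 $\theta\in\Theta$: $|||\mathcal{D}(\Phi^{d,\theta,K,\varepsilon}_{n,m,t})|||\le c_{d,\varepsilon}(3m)^n$; (iv) for all $t\in[0,T]$, $\theta\in\Theta$, $x\in\mathbb{R}^d$: $U^{d,\theta,K,\varepsilon}_{n,m}(t,x,\omega)=(\mathcal{R}(\Phi^{d,\theta,K,\varepsilon}_{n,m,t}))(x)$.
   Context: Setting. $T\in(0,\infty)$, $c\in[2,\infty)$, $f\in C(\mathbb{R},\mathbb{R})$. For each $d\in\mathbb{N}$: $\beta^d\in C(\mathbb{R}^d,\mathbb{R}^d)$, $\sigma^d\in C(\mathbb{R}^d,\mathbb{R}^{d\times d})$, $\gamma^d\in C(\mathbb{R}^{2d},\mathbb{R}^d)$, $g^d\in C(\mathbb{R}^d,\mathbb{R})$, $\nu^d$ a Lévy measure on $\mathcal{B}(\mathbb{R}^d\setminus\{0\})$, satisfying: (A1) there is $C_d$ with $\|\gamma^d(x,z)\|^2\le C_d(1\wedge\|z\|^2)$, $\|\gamma^d(x,z)-\gamma^d(y,z)\|^2\le C_d\|x-y\|^2(1\wedge\|z\|^2)$; (A2) $D_x\gamma^d(x,z)$ exists and for some $\lambda_d>0$, $\lambda_d\le|\det(I_d+\delta D_x\gamma^d(x,z))|$ for all $x,z$, $\delta\in[0,1]$; (A3) $\|\beta^d(x)-\beta^d(y)\|^2+\|\sigma^d(x)-\sigma^d(y)\|_F^2+\int\|\gamma^d(x,z)-\gamma^d(y,z)\|^2\nu^d(dz)\le c\|x-y\|^2$, $|f(w_1)-f(w_2)|^2\le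 c|w_1-w_2|^2$, $|g^d(x)-g^d(y)|^2\le cd^cT^{-1}\|x-y\|^2$, $\|\beta^d(0)\|^2+\|\sigma^d(0)\|_F^2+\int\|\gamma^d(0,z)\|^2\nu^d(dz)+T^3(|f(0)|+1)^2+T|g^d(0)|^2\le cd^c$ (integrals over $\mathbb{R}^d\setminus\{0\}$). For $d\in\mathbb{N}$, $\varepsilon\in(0,1)$: $\beta^d_\varepsilon\in C(\mathbb{R}^d,\mathbb{R}^d)$, $\sigma^d_\varepsilon\in C(\mathbb{R}^d,\mathbb{R}^{d\times d})$, $\gamma^d_\varepsilon\in C(\mathbb{R}^{2d},\mathbb{R}^d)$, $g^d_\varepsilon\in C(\mathbb{R}^d,\mathbb{R})$ satisfying: (B1) the analogue of (A1) with a constant $C_{d,\varepsilon}$; (B2) $\|\beta^d_\varepsilon(x)-\beta^d_\varepsilon(y)\|^2+\|\sigma^d_\varepsilon(x)-\sigma^d_\varepsilon(y)\|_F^2+\int\|\gamma^d_\varepsilon(x,z)-\gamma^d_\varepsilon(y,z)\|^2\nu^d(dz)\le c\|x-y\|^2$, $|g^d_\varepsilon(x)-g^d_\varepsilon(y)|^2\le cd^cT^{-1}\|x-y\|^2$, $\|\beta^d_\varepsilon(0)\|^2+\|\sigma^d_\varepsilon(0)\|_F^2+\int\|\gamma^d_\varepsilon(0,z)\|^2\nu^d(dz)+T|g^d_\varepsilon(0)|^2\le cd^c$, and $\|\beta^d_\varepsilon(x)-\beta^d(x)\|^2+\|\sigma^d_\varepsilon(x)-\sigma^d(x)\|_F^2+\int\|\gamma^d_\varepsilon(x,z)-\gamma^d(x,z)\|^2\nu^d(dz)+|g^d_\varepsilon(x)-g^d(x)|^2\le\varepsilon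 cd^c(d^c+\|x\|^2)$ for all $x,y$. Moreover, for every $d,\varepsilon$, $F^d_\varepsilon\colon\mathbb{R}^d\to\mathbb{R}^{d\times d}$ and $G^d\colon\mathbb{R}^d\to\mathbb{R}^d$ are measurable with $\gamma^d_\varepsilon(y,z)=F^d_\varepsilon(y)G^d(z)$; for every $v\in\mathbb{R}^d$, $\Phi_{\beta^d_\varepsilon},\Phi_{\sigma^d_\varepsilon,v},\Phi_{F^d_\varepsilon,v}\in\mathbf{N}$ satisfy $\beta^d_\varepsilon=\mathcal{R}(\Phi_{\beta^d_\varepsilon})$, $\sigma^d_\varepsilon(\cdot)v=\mathcal{R}(\Phi_{\sigma^d_\varepsilon,v})$, $F^d_\varepsilon(\cdot)v=\mathcal{R}(\Phi_{F^d_\varepsilon,v})$, $\mathcal{D}(\Phi_{\sigma^d_\varepsilon,v})=\mathcal{D}(\Phi_{\sigma^d_\varepsilon,0})$, $\mathcal{D}(\Phi_{F^d_\varepsilon,v})=\mathcal{D}(\Phi_{F^d_\varepsilon,0})$. Probability. $(\Omega,\mathcal{F},\mathbb{P},(\mathbb{F}_t)_{t\in[0,T]})$ a filtered probability space with the usual conditions; $\Theta=\bigcup_{n\in\mathbb{N}}\mathbb{Z}^n$; $\mathfrak{t}^\theta$, $\theta\in\Theta$, i.i.d. uniform on $[0,1]$, $\mathfrak{T}^\theta_t=t+(T-t)\mathfrak{t}^\theta$; for each $d$, $W^{d,\theta}$ i.i.d. standard $d$-dim $(\mathbb{F}_t)$-Brownian motions, $N^{d,\theta}$ independent $(\mathbb{F}_t)$-Poisson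 random measures on $[0,\infty)\times(\mathbb{R}^d\setminus\{0\})$ with compensator $\nu^d(dz)dt$, $\tilde N^{d,\theta}=N^{d,\theta}-\nu^d(dz)dt$; $\mathcal{F}_0$, $(\mathfrak{t}^\theta)$, $(N^{d,\theta})$, $(W^{d,\theta})$ independent. $\lfloor t\rfloor_K=\max(\{0,\frac TK,\dots,T\}\cap((-\infty,t)\cup\{0\}))$ and $X^{d,\theta,K,\varepsilon,t,x}$ on $[t,T]$ satisfies $X_s=x+\int_t^s\beta^d_\varepsilon(X_{\max\{t,\lfloor u-\rfloor_K\}})du+\int_t^s\sigma^d_\varepsilon(X_{\max\{t,\lfloor u-\rfloor_K\}})dW^{d,\theta}_u+\int_t^s\int_{\mathbb{R}^d\setminus\{0\}}\gamma^d_\varepsilon(X_{\max\{t,\lfloor u-\rfloor_K\}},z)\tilde N^{d,\theta}(dz,du)$. Networks. $\mathbf{A}_k$ componentwise ReLU; $\mathbf{N}=\bigcup_{H\in\mathbb{N}}\bigcup_{(k_0,\dots,k_{H+1})\in\mathbb{N}^{H+2}}\prod_{j=1}^{H+1}(\mathbb{R}^{k_j\times k_{j-1}}\times\mathbb{R}^{k_j})$; for $\Phi=((W_1,B_1),\dots,(W_{H+1},B_{H+1}))$: $\mathcal{D}(\Phi)=(k_0,\dots,k_{H+1})$, $\mathcal{R}(\Phi)\in C(\mathbb{R}^{k_0},\mathbb{R}^{k_{H+1}})$, $(\mathcal{R}(\Phi))(x_0)=W_{H+1}x_H+B_{H+1}$ with $x_j=\mathbf{A}_{k_j}(W_jx_{j-1}+B_j)$.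 For a vector $x=(x_1,\dots,x_k)$: $\dim(x)=k$, $|||x|||=\max_i|x_i|$. $\|\cdot\|$ Euclidean, $\|\cdot\|_F$ Frobenius norm. *)

(* Defs.v *)
From HB Require Import structures.
From mathcomp Require Import all_boot all_order all_algebra.
From Stdlib Require Rdefinitions.
From mathcomp Require Import Rstruct.
Notation R := Rdefinitions.R.
Set Implicit Arguments. Unset Strict Implicit. Unset Printing Implicit Defensive.
Import Order.TTheory GRing.Theory Num.Theory.
Local Open Scope ring_scope.

Inductive pnet : nat -> nat -> Type :=
| pLast : forall a b, 'M[R]_(b, a) -> 'cV[R]_b -> pnet a b
| pHid  : forall a b c, 'M[R]_(b, a) -> 'cV[R]_b -> pnet b c -> pnet a c.

Definition relu k (v : 'cV[R]_k) : 'cV[R]_k := map_mx (fun y : R => Num.max y 0) v.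

Fixpoint realize a b (Phi : pnet a b) : 'cV[R]_a -> 'cV[R]_b :=
  match Phi in pnet a b return 'cV[R]_a -> 'cV[R]_b with
  | pLast _ _ W B => fun x => W *m x + B
  | pHid _ _ _ W B rest => fun x => realize rest (relu (W *m x + B))
  end.

Fixpoint dims a b (Phi : pnet a b) : seq nat :=
  match Phi with
  | pLast a b _ _ => [:: a; b]
  | pHid a _ _ _ _ rest => a :: dims rest
  end.

(* Phi belongs to the set N: H >= 1 (i.e. at least H+2 >= 3 entries in D)  *)
Definition isANN a b (Phi : pnet a b) : bool :=
  leq 3 (size (dims Phi)) && all (fun k => leq 1 k) (dims Phi).

Definition supn (s : seq nat) : nat := \max_(k <- s) k.

Definition cst1 (x : R) : 'cV[R]_1 := const_mx x.
Definition sc (v : 'cV[R]_1) : R := v ord0 ord0.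

(* Index set Theta = U_{n in N} Z^n, represented by nonempty sequences.    *)
Definition inTheta (th : seq int) : Prop := leq 1 (size th).

Definition flrK (T : R) (K : nat) (u : R) : R :=
  \big[Num.max/0]_(k < K.+1 | (T * k%:R / K%:R < u) || (k == 0%N :> nat))
     (T * k%:R / K%:R).

Definition indN (n : nat) : R := if leq 1 n then 1 else 0.

(* Main.v *)
Require Import Defs.
From HB Require Import structures.
From mathcomp Require Import all_boot all_order all_algebra.
From Stdlib Require Rdefinitions.
From mathcomp Require Import Rstruct.
From mathcomp Require Import zify ring lra.
From Stdlib Require Import IndefiniteDescription.
Import Order.TTheory GRing.Theory Num.Theory.
Local Open Scope ring_scope.

Set Implicit Arguments. Unset Strict Implicit. Unset Printing Implicit Defensive.

Definition unet (a b W : nat) : Type :=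
  (('M[R]_(W, a) * 'cV[R]_W) * seq ('M[R]_W * 'cV[R]_W) * ('M[R]_(b, W) * 'cV[R]_b))%type.

Definition hid W (hs : seq ('M[R]_W * 'cV[R]_W)) (v : 'cV[R]_W) : 'cV[R]_W :=
  foldl (fun v p => relu (p.1 *m v + p.2)) v hs.

Definition ueval a b W (N : unet a b W) (x : 'cV[R]_a) : 'cV[R]_b :=
  N.2.1 *m hid N.1.2 (relu (N.1.1.1 *m x + N.1.1.2)) + N.2.2.

Fixpoint tailnet W b (hs : seq ('M[R]_W * 'cV[R]_W)) (L : 'M[R]_(b, W) * 'cV[R]_b) : pnet W b :=
  match hs with
  | [::] => pLast L.1 L.2
  | p :: hs' => pHid p.1 p.2 (tailnet hs' L)
  end.

Definition topnet a b W (N : unet a b W) : pnet a b :=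
  pHid N.1.1.1 N.1.1.2 (tailnet N.1.2 N.2).

Lemma realize_tailnet W b hs (L : 'M[R]_(b, W) * 'cV[R]_b) v :
  realize (tailnet hs L) v = L.1 *m hid hs v + L.2.
Proof. by elim: hs v => [|p hs IH] v //=; rewrite IH. Qed.

Lemma realize_topnet a b W (N : unet a b W) x : realize (topnet N) x = ueval N x.
Proof. by rewrite /= realize_tailnet. Qed.

Lemma dims_tailnet W b hs (L : 'M[R]_(b, W) * 'cV[R]_b) :
  dims (tailnet hs L) = nseq (size hs).+1 W ++ [:: b].
Proof. by elim: hs => [|p hs IH] //=; rewrite IH. Qed.

Lemma dims_topnet a b W (N : unet a b W) :
  dims (topnet N) = a :: nseq (size N.1.2).+1 W ++ [:: b].
Proof. by rewrite /= dims_tailnet. Qed.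

Definition rep a b k W (h : 'cV[R]_a -> 'cV[R]_b) : Prop :=
  exists N : unet a b W, size N.1.2 = k /\ forall x, ueval N x = h x.
Arguments rep : clear implicits.

Lemma rep_ext a b k W h h' : rep a b k W h -> (forall x, h x = h' x) -> rep a b k W h'.
Proof. by move=> [N [HN HE]] Hx; exists N; split => // x; rewrite HE. Qed.

Lemma relu_col m n (u : 'cV[R]_m) (v : 'cV[R]_n) : relu (col_mx u v) = col_mx (relu u) (relu v).
Proof. by rewrite /relu map_col_mx. Qed.

Lemma relu_idem n (v : 'cV[R]_n) : relu (relu v) = relu v.
Proof.
apply/matrixP => i j; rewrite /relu !mxE.
by have [h|h] := leP (v i j) 0; rewrite ?maxxx // max_l // ltW.
Qed.
Lemma relu_id n (v : 'cV[R]_n) : relu v - relu (- v) = v.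
Proof.
apply/matrixP => i j; rewrite /relu !mxE.
have [h|h] := leP (v i j) 0.
  by rewrite max_l ?oppr_ge0 // sub0r opprK.
by rewrite max_r ?subr0 // oppr_le0 ltW.
Qed.

Lemma rep_const a b k W (B : 'cV[R]_b) : rep a b k W (fun _ => B).
Proof.
exists ((0, 0), nseq k (0, 0), (0, B)); split; first by rewrite size_nseq.
by move=> x; rewrite /ueval /= mul0mx add0r.
Qed.

Lemma rep_post a b c k W h (M : 'M[R]_(c, b)) (B : 'cV[R]_c) :
  rep a b k W h -> rep a c k W (fun x => M *m h x + B).
Proof.
move=> [N [HN HE]]; exists (N.1, (M *m N.2.1, M *m N.2.2 + B)); split => // x.
by rewrite /ueval /= -HE /ueval mulmxDr mulmxA addrA.
Qed.

Lemma rep_pre a b c k W h (A : 'M[R]_(b, a)) (B : 'cV[R]_b) :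
  rep b c k W h -> rep a c k W (fun x => h (A *m x + B)).
Proof.
move=> [N [HN HE]]; exists ((N.1.1.1 *m A, N.1.1.1 *m B + N.1.1.2), N.1.2, N.2); split => // x.
by rewrite -HE /ueval /= mulmxDr mulmxA addrA.
Qed.

Lemma hid_relu W (hs : seq ('M[R]_W * 'cV[R]_W)) v : hid hs (relu v) = relu (hid hs (relu v)).
Proof.
elim: hs v => [|p hs IH] v /=; first by rewrite relu_idem.
exact: IH.
Qed.

Lemma rep_deep a b k W h : rep a b k W h -> rep a b k.+1 W h.
Proof.
move=> [N [HN HE]]; exists (N.1.1, (1%:M, 0) :: N.1.2, N.2); split; first by rewrite /= HN.
by move=> x; rewrite -HE /ueval /= mul1mx addr0 relu_idem.
Qed.

Lemma rep_deepen a b k k' W h : (k <= k')%N -> rep a b k W h -> rep a b k' W h.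
Proof.
move=> /subnK <-; elim: (k' - k)%N => [|j IH] H //; rewrite addSn; exact/rep_deep/IH.
Qed.

Lemma rep_comp a b c k1 k2 W h1 h2 :
  rep a b k1 W h1 -> rep b c k2 W h2 -> rep a c (k1 + k2).+1 W (fun x => h2 (h1 x)).
Proof.
move=> [N1 [HN1 HE1]] [N2 [HN2 HE2]].
exists (N1.1.1, N1.1.2 ++ (N2.1.1.1 *m N1.2.1, N2.1.1.1 *m N1.2.2 + N2.1.1.2) :: N2.1.2, N2.2).
split; first by rewrite size_cat /= HN1 HN2 addnS.
move=> x; rewrite -HE2 -HE1 /ueval /hid foldl_cat /=.
by rewrite mulmxDr mulmxA addrA.
Qed.

Definition stack_h W1 W2 (p : ('M[R]_W1 * 'cV[R]_W1) * ('M[R]_W2 * 'cV[R]_W2)) :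
   'M[R]_(W1 + W2) * 'cV[R]_(W1 + W2) :=
  (block_mx p.1.1 0 0 p.2.1, col_mx p.1.2 p.2.2).

Lemma hid_stack W1 W2 hs1 hs2 (v1 : 'cV[R]_W1) (v2 : 'cV[R]_W2) :
  size hs1 = size hs2 ->
  hid (map (@stack_h W1 W2) (zip hs1 hs2)) (col_mx v1 v2) = col_mx (hid hs1 v1) (hid hs2 v2).
Proof.
elim: hs1 hs2 v1 v2 => [|p1 hs1 IH] [|p2 hs2] v1 v2 //= [] Hs.
rewrite -IH //; congr hid.
by rewrite /stack_h /= mul_block_col !mul0mx addr0 add0r add_col_mx relu_col.
Qed.

Lemma rep_stack a b1 b2 k W1 W2 h1 h2 :
  rep a b1 k W1 h1 -> rep a b2 k W2 h2 ->
  rep a (b1 + b2) k (W1 + W2) (fun x => col_mx (h1 x) (h2 x)).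
Proof.
move=> [N1 [HN1 HE1]] [N2 [HN2 HE2]].
exists ((col_mx N1.1.1.1 N2.1.1.1, col_mx N1.1.1.2 N2.1.1.2),
        map (@stack_h W1 W2) (zip N1.1.2 N2.1.2),
        (block_mx N1.2.1 0 0 N2.2.1, col_mx N1.2.2 N2.2.2)).
split; first by rewrite size_map size_zip HN1 HN2 minnn.
move=> x; rewrite -HE1 -HE2 /ueval /= [col_mx N1.1.1.1 _ *m x]mul_col_mx add_col_mx relu_col hid_stack ?HN1 ?HN2 //.
by rewrite mul_block_col !mul0mx addr0 add0r add_col_mx.
Qed.

Lemma rep_lin a b k W1 W2 h1 h2 (c1 c2 : R) :
  rep a b k W1 h1 -> rep a b k W2 h2 ->
  rep a b k (W1 + W2) (fun x => c1 *: h1 x + c2 *: h2 x).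
Proof.
move=> H1 H2; apply: rep_ext (rep_post (row_mx c1%:M c2%:M) 0 (rep_stack H1 H2)) _.
by move=> x; rewrite mul_row_col !mul_scalar_mx addr0.
Qed.

Lemma rep_add a b k W1 W2 h1 h2 :
  rep a b k W1 h1 -> rep a b k W2 h2 -> rep a b k (W1 + W2) (fun x => h1 x + h2 x).
Proof.
move=> H1 H2; apply: rep_ext (rep_lin 1 1 H1 H2) _ => x; by rewrite !scale1r.
Qed.

Lemma rep_widen a b k W W' h : (W <= W')%N -> rep a b k W h -> rep a b k W' h.
Proof.
move=> /subnKC <- H; apply: rep_ext (rep_add H (rep_const a k (W' - W) 0)) _ => x.
by rewrite addr0.
Qed.

Lemma rep_sum a b k n (w : 'I_n -> nat) (h : 'I_n -> 'cV[R]_a -> 'cV[R]_b) :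
  (forall i, rep a b k (w i) (h i)) -> rep a b k (\sum_(i < n) w i) (fun x => \sum_(i < n) h i x).
Proof.
elim: n w h => [|n IH] w h H.
  apply: rep_ext (rep_const _ _ _ 0) _ => x; by rewrite big_ord0.
rewrite big_ord_recr /=.
apply: rep_ext (rep_add (IH (fun i => w (widen_ord (leqnSn n) i)) (fun i => h (widen_ord (leqnSn n) i)) (fun i => H _)) (H ord_max)) _.
by move=> x; rewrite big_ord_recr.
Qed.

Lemma rep_id a k : rep a a k (a + a) id.
Proof.
exists ((col_mx 1%:M (- 1%:M), 0), nseq k (1%:M, 0), (row_mx 1%:M (- 1%:M), 0)).
split; first by rewrite size_nseq.
move=> x; rewrite /ueval /= !addr0 mul_col_mx mul1mx mulNmx mul1mx relu_col.
have Hh : forall j (v : 'cV[R]_(a + a)), hid (nseq j (1%:M, 0)) (relu v) = relu v.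
  by elim=> [|j IH] v //=; rewrite mul1mx addr0 relu_idem IH.
by rewrite -relu_col Hh relu_col mul_row_col mul1mx mulNmx mul1mx relu_id.
Qed.

Lemma relu_pid S b (y : 'cV[R]_b) : relu ((pid_mx b : 'M[R]_(S, b)) *m y) = pid_mx b *m relu y.
Proof.
apply/matrixP => i j; rewrite /relu !mxE.
case: (ltnP i b) => hi.
  rewrite (bigD1 (Ordinal hi)) //= [in RHS](bigD1 (Ordinal hi)) //= !big1 ?addr0.
  - by rewrite !mxE eqxx hi !mul1r.
  - move=> k hk; rewrite !mxE; case: eqP => [e|]; last by rewrite mul0r.
    by case/eqP: hk; apply: val_inj.
  - move=> k hk; rewrite !mxE; case: eqP => [e|]; last by rewrite mul0r.
    by case/eqP: hk; apply: val_inj.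
rewrite !big1 ?maxxx // => k _; rewrite !mxE; by rewrite ltnNge hi andbF mul0r.
Qed.

Lemma rep_layer1 a b c S (W : 'M[R]_(b, a)) B (W2 : 'M[R]_(c, b)) B2 :
  (b <= S)%N -> rep a c 0 S (fun x => W2 *m relu (W *m x + B) + B2).
Proof.
move=> hb; exists ((pid_mx b *m W, pid_mx b *m B), [::], (W2 *m pid_mx b, B2)); split => // x.
rewrite /ueval /= -[pid_mx b *m W *m x]mulmxA -mulmxDr relu_pid mulmxA -(mulmxA W2) pid_mx_id // pid_mx_1 mulmx1.
by [].
Qed.

Lemma rep_layer a b c k S (W : 'M[R]_(b, a)) B h :
  (b <= S)%N -> rep b c k S h -> rep a c k.+1 S (fun x => h (relu (W *m x + B))).
Proof.
move=> hb [N [HN HE]].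
exists ((pid_mx b *m W, pid_mx b *m B), (N.1.1.1 *m pid_mx b, N.1.1.2) :: N.1.2, N.2).
split; first by rewrite /= HN.
move=> x; rewrite -HE /ueval /= -[pid_mx b *m W *m x]mulmxA -mulmxDr relu_pid.
by rewrite mulmxA -(mulmxA N.1.1.1) pid_mx_id // pid_mx_1 mulmx1.
Qed.

Lemma supn_cons x s : supn (x :: s) = maxn x (supn s).
Proof. by rewrite /supn big_cons. Qed.

Lemma size_dims a b (Phi : pnet a b) : (2 <= size (dims Phi))%N.
Proof. by elim: Phi => //= a0 b0 c0 _ _ rest IH; apply: leqW. Qed.

Lemma rep_pnet_aux a b (Phi : pnet a b) S : (supn (dims Phi) <= S)%N ->
  forall a' (W : 'M[R]_(a, a')) B,
  rep a' b (size (dims Phi) - 2)%N S (fun x => realize Phi (relu (W *m x + B))).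
Proof.
elim: Phi S => [a0 b0 W2 B2 | a0 b0 c0 W2 B2 rest IH] S /=.
  rewrite !supn_cons geq_max => /andP [ha _] a' W B.
  exact: rep_layer1.
rewrite supn_cons geq_max => /andP [ha hs] a' W B.
have := size_dims rest; case E: (size (dims rest)) => [|[|s]] // _.
have H := rep_layer W B ha (IH S hs a0 W2 B2); rewrite E in H.
have -> : (s.+3 - 2 = (s.+2 - 2).+1)%N by rewrite !subSS !subn0.
exact H.
Qed.

Lemma rep_pnet a b (Phi : pnet a b) S : (supn (dims Phi) <= S)%N ->
  (3 <= size (dims Phi))%N -> rep a b (size (dims Phi) - 3)%N S (realize Phi).
Proof.
case: Phi => [a0 b0 W2 B2 | a0 b0 c0 W2 B2 rest] //=.
rewrite supn_cons geq_max => /andP [_ hs] _.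
have -> : ((size (dims rest)).+1 - 3 = size (dims rest) - 2)%N by rewrite subSS.
apply: rep_ext (rep_pnet_aux hs W2 B2) _ => x //.
Qed.


Lemma cst1_sc (v : 'cV[R]_1) : cst1 (sc v) = v.
Proof. by apply/matrixP => i j; rewrite /cst1 /sc mxE !ord1. Qed.

Lemma sc_cst1 (x : R) : sc (cst1 x) = x.
Proof. by rewrite /cst1 /sc mxE. Qed.

Lemma cst1D (x y : R) : cst1 (x + y) = cst1 x + cst1 y.
Proof. by apply/matrixP => i j; rewrite /cst1 !mxE. Qed.

Lemma cst1M (a x : R) : cst1 (a * x) = a *: cst1 x.
Proof. by apply/matrixP => i j; rewrite /cst1 !mxE. Qed.

Lemma cst1_sum n (F : 'I_n -> R) : cst1 (\sum_(i < n) F i) = \sum_(i < n) cst1 (F i).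
Proof. by apply/matrixP => i j; rewrite /cst1 summxE !mxE; apply: eq_bigr => k _; rewrite mxE. Qed.

Lemma sum3 n : (1 + 2 * \sum_(0 <= l < n) 3 ^ l = 3 ^ n)%N.
Proof. elim: n => [|n IH]; first by rewrite big_geq. rewrite big_nat_recr //= expnS; lia. Qed.

Lemma width_sum (M m n : nat) :
  (\sum_(i < m ^ n) M + \sum_(l < n) \sum_(i < m ^ (n - l)) (M * (3 * m) ^ l + M * (3 * m) ^ l)
   = M * (3 * m) ^ n)%N.
Proof.
rewrite sum_nat_const card_ord.
rewrite (eq_bigr (fun l : 'I_n => (m ^ n * M * 2) * 3 ^ l)%N); last first.
  move=> l _; rewrite sum_nat_const card_ord expnMn.
  have hl : (l <= n)%N by apply: ltnW.
  have -> : (m ^ n = m ^ (n - l) * m ^ l)%N by rewrite -expnD subnK.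
  nia.
rewrite -big_distrr /= expnMn -sum3 big_mkord.
move: (\sum_(i < n) 3 ^ i)%N => S. nia.
Qed.

Lemma flrK_val T K s : exists k : nat,
  flrK T K s = T * k%:R / K%:R /\ ((T * k%:R / K%:R < s) || (k == 0%N)).
Proof.
rewrite /flrK; elim/big_rec: _ => [|i x Pi [k [-> Hk]]].
  by exists 0%N; rewrite mulr0 mul0r eqxx orbT.
case: leP => _; first by exists k.
by exists i.
Qed.

Lemma cst1B (x y : R) : cst1 (x - y) = cst1 x - cst1 y.
Proof. by apply/matrixP => i j; rewrite /cst1 !mxE. Qed.

Lemma cst1_0 : cst1 0 = 0.
Proof. by apply/matrixP => i j; rewrite /cst1 !mxE. Qed.

Lemma supn_le s B : (forall k, k \in s -> (k <= B)%N) -> (supn s <= B)%N.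
Proof.
move=> H; rewrite /supn big_seq; elim/big_rec: _ => // i x Hi Hx.
by rewrite geq_max Hx andbT; apply: H.
Qed.

Lemma arith_L2 L : (3 <= L)%N -> (L - 2 = (L - 3).+1)%N.
Proof. lia. Qed.

Lemma arith_PQ K L : (3 <= L)%N -> (K * (L - 1) = K * (L - 2) + K)%N.
Proof. move=> h; rewrite -mulnSr; congr muln. nia. Qed.

Definition kkf K L Lf Lg l := (l.+1 * (K * (L - 1) + 1) + l * (Lf - 2) + Lg - 1 - 3)%N.

Lemma arith_D1 K L Lf Lg n0 : (0 < K)%N -> (3 <= L)%N -> (3 <= Lf)%N -> (3 <= Lg)%N ->
  ((K * (L - 2) + (Lg - 3)).+1 <= kkf K L Lf Lg n0)%N.
Proof. move=> hK hL hLf hLg; rewrite /kkf mulSn (arith_PQ K hL). nia. Qed.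

Lemma arith_D2 K L Lf Lg l n0 : (0 < K)%N -> (3 <= L)%N -> (3 <= Lf)%N -> (3 <= Lg)%N ->
  (l < n0)%N -> (((K * (L - 2) + kkf K L Lf Lg l).+1 + (Lf - 3)).+1 <= kkf K L Lf Lg n0)%N.
Proof.
move=> hK hL hLf hLg hl; have [e ->] : exists e, n0 = (l.+1 + e)%N by exists (n0 - l.+1)%N; lia.
rewrite /kkf (arith_PQ K hL). nia.
Qed.

Lemma arith_size K L Lf Lg n : (0 < K)%N -> (3 <= L)%N -> (3 <= Lf)%N -> (3 <= Lg)%N ->
  ((kkf K L Lf Lg n).+1 + 1).+1 = (n.+1 * (K * (L - 1) + 1) + n * (Lf - 2) + Lg - 1)%N.
Proof. move=> hK hL hLf hLg; rewrite /kkf mulSn (arith_PQ K hL). nia. Qed.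

Lemma tau_bounds (t T a : R) : 0 <= t <= T -> 0 <= a <= 1 -> t <= t + (T - t) * a <= T.
Proof. case/andP => h1 h2; case/andP => h3 h4; apply/andP; split. nra. nra. Qed.

Unset Implicit Arguments.
Set Strict Implicit.

Theorem proposition5p12
  (T : R) (K : nat) (Omega : Type) (omega : Omega)
  (* approximating coefficients beta^d_eps, sigma^d_eps, F^d_eps, g^d_eps, f_eps *)
  (beta : forall d : nat, R -> 'cV[R]_d -> 'cV[R]_d)
  (sigma : forall d : nat, R -> 'cV[R]_d -> 'M[R]_d)
  (Fm : forall d : nat, R -> 'cV[R]_d -> 'M[R]_d)
  (g : forall d : nat, R -> 'cV[R]_d -> R)
  (f : R -> R -> R)
  (* networks *)
  (Phibeta : forall d : nat, R -> pnet d d)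
  (Phisigma : forall d : nat, R -> 'cV[R]_d -> pnet d d)
  (PhiF : forall d : nat, R -> 'cV[R]_d -> pnet d d)
  (Phif : R -> pnet 1 1)
  (Phig : forall d : nat, R -> pnet d 1)
  (* driving noise: Brownian motions W^{d,theta}, the jump processes
     Jp^{d,theta}_s = int_0^s int G^d(z) tilde N^{d,theta}(dz,du), and t^theta *)
  (W : forall d : nat, seq int -> Omega -> R -> 'cV[R]_d)
  (Jp : forall d : nat, seq int -> Omega -> R -> 'cV[R]_d)
  (tt : seq int -> Omega -> R)
  (* Euler processes X^{d,theta,K,eps,t,x}_s (omega) *)
  (X : forall d : nat, R -> seq int -> R -> 'cV[R]_d -> Omega -> R -> 'cV[R]_d)
  (* MLP approximations U^{d,theta,K,eps}_{n,m}(t,x,omega) *)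
  (U : forall d : nat, R -> seq int -> int -> int -> R -> 'cV[R]_d -> Omega -> R)
  (c : nat -> R -> R) :
  0 < T ->
  (0 < K)%N ->
  (* network representations of the coefficients *)
  (forall d eps, (0 < d)%N -> 0 < eps < 1 ->
     isANN (Phibeta d eps) /\ (forall x, beta d eps x = realize (Phibeta d eps) x)) ->
  (forall d eps, (0 < d)%N -> 0 < eps < 1 -> forall v : 'cV[R]_d,
     isANN (Phisigma d eps v) /\
     (forall x, sigma d eps x *m v = realize (Phisigma d eps v) x) /\
     dims (Phisigma d eps v) = dims (Phisigma d eps 0)) ->
  (forall d eps, (0 < d)%N -> 0 < eps < 1 -> forall v : 'cV[R]_d,
     isANN (PhiF d eps v) /\
     (forall x, Fm d eps x *m v = realize (PhiF d eps v) x) /\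
     dims (PhiF d eps v) = dims (PhiF d eps 0)) ->
  (forall eps, 0 < eps < 1 ->
     isANN (Phif eps) /\ (forall y, f eps y = sc (realize (Phif eps) (cst1 y)))) ->
  (forall d eps, (0 < d)%N -> 0 < eps < 1 ->
     isANN (Phig d eps) /\ (forall x, g d eps x = sc (realize (Phig d eps) x))) ->
  (* t^theta takes values in [0,1] *)
  (forall th w, 0 <= tt th w <= 1) ->
  (* X solves the Euler-type SDE (piecewise constant integrands, so the
     integrals are sums of increments over the pieces (max(t,floor_K(u-)), u]) *)
  (forall d eps th t (x : 'cV[R]_d) w, (0 < d)%N -> 0 < eps < 1 -> inTheta th ->
     0 <= t <= T ->
     X d eps th t x w t = x /\
     (forall s, t < s <= T ->
        let r := Num.max t (flrK T K s) in
        X d eps th t x w s =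
          X d eps th t x w r
          + (s - r) *: beta d eps (X d eps th t x w r)
          + sigma d eps (X d eps th t x w r) *m (W d th w s - W d th w r)
          + Fm d eps (X d eps th t x w r) *m (Jp d th w s - Jp d th w r))) ->
  (* the MLP recursion *)
  (forall d eps th (n m : nat) t (x : 'cV[R]_d) w,
     (0 < d)%N -> 0 < eps < 1 -> inTheta th -> (0 < m)%N -> 0 <= t <= T ->
     U d eps th n%:Z m%:Z t x w =
       indN n / (m ^ n)%:R *
         \sum_(i < m ^ n)
            g d eps (X d eps (th ++ [:: 0%Z; - (i.+1)%:Z]) t x w T)
     + \sum_(l < n)
         ((T - t) / (m ^ (n - l))%:R *
          \sum_(i < m ^ (n - l))
            (let th1 := th ++ [:: l%:Z; (i.+1)%:Z] in
             let th2 := th ++ [:: - l%:Z; (i.+1)%:Z] in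
             let tau := t + (T - t) * tt th1 w in
             let y := X d eps th1 t x w tau in
             f eps (U d eps th1 l%:Z m%:Z tau y w)
             - indN l * f eps (U d eps th2 (l%:Z - 1) m%:Z tau y w)))) ->
  (* the constants c_{d,eps} *)
  (forall d eps, (0 < d)%N -> 0 < eps < 1 ->
     c d eps >= 2 * d%:R + (supn (dims (Phif eps)))%:R
                 + (supn (dims (Phig d eps)))%:R
                 + (supn (dims (Phibeta d eps)))%:R
                 + (supn (dims (Phisigma d eps 0)))%:R
                 + (supn (dims (PhiF d eps 0)))%:R) ->
  forall (m n d : nat) (eps : R), (0 < m)%N -> (0 < d)%N -> 0 < eps < 1 ->
  exists Phi : R -> seq int -> pnet d 1,
    (forall t th, 0 <= t <= T -> inTheta th -> isANN (Phi t th)) /\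
    (* (i) *)
    (forall t1 t2 th1 th2, 0 <= t1 <= T -> 0 <= t2 <= T ->
       inTheta th1 -> inTheta th2 ->
       dims (Phi t1 th1) = dims (Phi t2 th2)) /\
    (* (ii) *)
    (forall t th, 0 <= t <= T -> inTheta th ->
       size (dims (Phi t th)) =
         (n.+1 * (K * (maxn (size (dims (Phibeta d eps)))
                        (maxn (size (dims (Phisigma d eps 0%R)))
                              (size (dims (PhiF d eps 0%R)))) - 1) + 1)
          + n * (size (dims (Phif eps)) - 2)
          + size (dims (Phig d eps)) - 1)%N) /\
    (* (iii) *)
    (forall t th, 0 <= t <= T -> inTheta th ->
       (supn (dims (Phi t th)))%:R <= c d eps * (3 * m%:R) ^+ n) /\
    (* (iv) *)
    (forall t th (x : 'cV[R]_d), 0 <= t <= T -> inTheta th ->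
       U d eps th n%:Z m%:Z t x omega = sc (realize (Phi t th) x)).
Proof.
move=> HT HK Hbeta Hsigma HF Hf Hg Htt HX HU Hc m n d eps Hm Hd Heps.
set Lb := size (dims (Phibeta d eps)).
set Ls := size (dims (Phisigma d eps 0)).
set LF := size (dims (PhiF d eps 0)).
set L := maxn Lb (maxn Ls LF).
set Lf := size (dims (Phif eps)).
set Lg := size (dims (Phig d eps)).
set Sb := supn (dims (Phibeta d eps)).
set Ss := supn (dims (Phisigma d eps 0)).
set SF := supn (dims (PhiF d eps 0)).
set Sf := supn (dims (Phif eps)).
set Sg := supn (dims (Phig d eps)).
set E := (d + d + Sb + Ss + SF)%N.
set M := (E + Sf + Sg)%N.
have [Hb1 Hb2] := Hbeta d eps Hd Heps.
have [Hf1 Hf2] := Hf eps Heps.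
have [Hg1 Hg2] := Hg d eps Hd Heps.
have [Hs1 _] := Hsigma d eps Hd Heps 0.
have [HF1 _] := HF d eps Hd Heps 0.
have hLb : (3 <= Lb)%N by case/andP: Hb1.
have hLs : (3 <= Ls)%N by case/andP: Hs1.
have hLF : (3 <= LF)%N by case/andP: HF1.
have hLf : (3 <= Lf)%N by case/andP: Hf1.
have hLg : (3 <= Lg)%N by case/andP: Hg1.
have hL : (3 <= L)%N by rewrite /L leq_max hLb.
have hLbL : (Lb <= L)%N by rewrite /L leq_maxl.
have hLsL : (Ls <= L)%N by rewrite /L (leq_trans _ (leq_maxr _ _)) // leq_maxl.
have hLFL : (LF <= L)%N by rewrite /L (leq_trans _ (leq_maxr _ _)) // leq_maxr.
have Hstep : forall (hh : R) (v1 v2 : 'cV[R]_d),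
  rep d d (L - 3) E (fun y => y + hh *: beta d eps y + sigma d eps y *m v1 + Fm d eps y *m v2).
  move=> hh v1 v2.
  have r0 := rep_id d (L - 3).
  have r1 : rep d d (L - 3) Sb (beta d eps).
    apply: rep_deepen (rep_ext (rep_pnet (leqnn _) hLb) (fun x => esym (Hb2 x))).
    by rewrite leq_sub2r.
  have [hs1 [hs2 hs3]] := Hsigma d eps Hd Heps v1.
  have r2 : rep d d (L - 3) Ss (fun y => sigma d eps y *m v1).
    have h := @rep_pnet d d (Phisigma d eps v1) Ss; rewrite hs3 in h.
    have {}h := h (leqnn _) hLs.
    apply: rep_deepen (rep_ext h (fun x => esym (hs2 x))).
    by rewrite leq_sub2r.
  have [hF1 [hF2 hF3]] := HF d eps Hd Heps v2.
  have r3 : rep d d (L - 3) SF (fun y => Fm d eps y *m v2).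
    have h := @rep_pnet d d (PhiF d eps v2) SF; rewrite hF3 in h.
    have {}h := h (leqnn _) hLF.
    apply: rep_deepen (rep_ext h (fun x => esym (hF2 x))).
    by rewrite leq_sub2r.
  apply: rep_ext (rep_add (rep_add (rep_add r0 (rep_post hh%:M 0 r1)) r2) r3) _.
  by move=> x; rewrite mul_scalar_mx addr0.
have hEd : (d + d <= E)%N by rewrite /E -!addnA leq_add2l leq_addr.
have HXrep : forall th t, inTheta th -> 0 <= t <= T -> forall s, t <= s <= T ->
    rep d d (K * (L - 2)) E (fun x => X d eps th t x omega s).
  move=> th t Hth Ht.
  have Hid : forall k, rep d d k E (fun x => X d eps th t x omega t).
    move=> k; apply: rep_ext (rep_widen hEd (rep_id d k)) _ => x.
    by rewrite ((HX d eps th t x omega Hd Heps Hth Ht).1).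
  suff HP : forall j s, t <= s <= T -> s * K%:R <= T * j%:R ->
      rep d d (j * (L - 2)) E (fun x => X d eps th t x omega s).
    move=> s Hs; apply: HP => //; rewrite mulrC [T * _]mulrC; apply: ler_wpM2l => //.
    by case/andP: Hs.
  have HK' : 0 < K%:R :> R by rewrite ltr0n.
  elim=> [|j IH] s Hs HsK.
    have -> : s = t.
      apply/eqP; rewrite eq_le; case/andP: Hs => -> _; rewrite andbT.
      case/andP: Ht => Ht0 _; apply: le_trans Ht0.
      by move: HsK; rewrite mulr0 pmulr_lle0.
    exact: Hid.
  case: (eqVneq s t) => [->|hst]; first exact: Hid.
  have hts : t < s by rewrite lt_neqAle eq_sym hst; case/andP: Hs.
  set r := Num.max t (flrK T K s).
  have Hr : rep d d (j * (L - 2)) E (fun x => X d eps th t x omega r).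
    case: (eqVneq r t) => [->|hrt]; first exact: Hid.
    have [k [Hk1 Hk2]] := flrK_val T K s.
    have hrfl : r = flrK T K s.
      by move: hrt; rewrite /r; case: leP => _ //; rewrite eqxx.
    have hrs : r <= s.
      rewrite hrfl Hk1; case/orP: Hk2 => [/ltW //|/eqP ->].
      by rewrite mulr0 mul0r; apply: le_trans (ltW hts); case/andP: Ht.
    apply: IH.
      by rewrite /r le_max lexx /=; apply: le_trans hrs _; case/andP: Hs.
    rewrite hrfl Hk1 mulfVK ?lt0r_neq0 //; apply: ler_wpM2l; first exact: ltW.
    rewrite ler_nat; case/orP: Hk2 => [hk|/eqP -> //].
    have : (T * k%:R < T * j.+1%:R).
      rewrite -(ltr_pM2r HK') mulfVK ?lt0r_neq0 // in hk.
      by apply: lt_le_trans hk _.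
    by rewrite ltr_pM2l // ltr_nat ltnS.
  have Hcmp := rep_comp Hr (Hstep (s - r) (W d th omega s - W d th omega r)
                                 (Jp d th omega s - Jp d th omega r)).
  have -> : (j.+1 * (L - 2) = (j * (L - 2) + (L - 3)).+1)%N.
    by rewrite mulSnr -addnS (arith_L2 hL).
  apply: rep_ext Hcmp _ => x.
  by rewrite ((HX d eps th t x omega Hd Heps Hth Ht).2 s (andb_true_intro (conj hts (proj2 (andP Hs))))).
pose kk := kkf K L Lf Lg.
pose WW l := (M * (3 * m) ^ l)%N.
have hD1 : forall n0, ((K * (L - 2) + (Lg - 3)).+1 <= kk n0)%N.
  by move=> n0; apply: arith_D1.
have hD2 : forall l n0, (l < n0)%N -> (((K * (L - 2) + kk l).+1 + (Lf - 3)).+1 <= kk n0)%N.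
  by move=> l n0 hl; apply: arith_D2.
have hm3 : forall l, (1 <= (3 * m) ^ l)%N by move=> l; rewrite expn_gt0 muln_gt0 Hm.
have hMW : forall l, (M <= WW l)%N by move=> l; rewrite /WW leq_pmulr.
have hWW : forall l l', (l' <= l)%N -> (WW l' <= WW l)%N.
  by move=> l l' hl; rewrite /WW leq_mul2l leq_pexp2l ?orbT // muln_gt0 Hm.
have hEM : (E <= M)%N by rewrite /M -addnA leq_addr.
have hSfM : (Sf <= M)%N by rewrite /M -addnA (leq_trans (leq_addr Sg Sf)) // leq_addl.
have hSgM : (Sg <= M)%N by rewrite /M leq_addl.
have hThApp : forall th s, inTheta th -> inTheta (th ++ s).
  by move=> th s; rewrite /inTheta size_cat => h; apply: leq_trans h (leq_addr _ _).
have Main : forall l t th, 0 <= t <= T -> inTheta th ->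
    rep d 1 (kk l) (WW l) (fun x => cst1 (U d eps th l%:Z m%:Z t x omega)).
  elim/ltn_ind => n0 IH t th Ht Hth.
  have Hcomp : forall (l' : nat) thX th' tau W0, (l' < n0)%N -> inTheta thX -> inTheta th' ->
      t <= tau <= T -> (WW l' <= W0)%N ->
      rep d 1 (kk n0) W0 (fun x => cst1 (f eps (U d eps th' l'%:Z m%:Z tau (X d eps thX t x omega tau) omega))).
    move=> l' thX th' tau W0 hl' hX' hth' Htau hW0.
    have Htau0 : 0 <= tau <= T.
      by case/andP: Htau => h1 ->; rewrite andbT; apply: le_trans h1; case/andP: Ht.
    have r1 := rep_widen (leq_trans (leq_trans hEM (hMW l')) hW0) (HXrep thX t hX' Ht tau Htau).
    have r2 := rep_widen hW0 (IH l' hl' tau th' Htau0 hth').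
    have r3 : rep 1 1 (Lf - 3) W0 (realize (Phif eps)).
      exact: rep_pnet (leq_trans hSfM (leq_trans (hMW l') hW0)) hLf.
    apply: rep_deepen (hD2 l' n0 hl') (rep_ext (rep_comp (rep_comp r1 r2) r3) _) => x.
    by rewrite Hf2 cst1_sc.
  have R2gen : forall (l : nat) thX th2 tau, (l < n0)%N -> inTheta thX -> inTheta th2 ->
      t <= tau <= T ->
      rep d 1 (kk n0) (WW l) (fun x => cst1 (indN l * f eps (U d eps th2 (l%:Z - 1) m%:Z tau
                                                  (X d eps thX t x omega tau) omega))).
    case=> [|l'] thX th2 tau hl hX hth2 Htau.
      apply: rep_ext (rep_const d (kk n0) (WW 0) 0) _ => x.
      by rewrite /indN /= mul0r cst1_0.
    apply: rep_ext (rep_post (indN l'.+1)%:M 0 (Hcomp l' thX th2 tau (WW l'.+1) (ltnW hl) hX hth2 Htau (hWW _ _ (leqnSn _)))) _ => x.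
    have hz : (l'.+1%:Z - 1 = l'%:Z)%R by rewrite -addn1 PoszD addrK.
    by rewrite mul_scalar_mx addr0 cst1M hz.
  have RA : rep d 1 (kk n0) (\sum_(i < (m ^ n0)%N) M)%N
      (fun x => \sum_(i < (m ^ n0)%N) cst1 (g d eps (X d eps (th ++ [:: 0%Z; - (i.+1)%:Z]) t x omega T))).
    apply: rep_sum => i.
    have HtT : t <= T <= T by rewrite lexx andbT; case/andP: Ht.
    have r1 := rep_widen hEM (HXrep _ t (hThApp th [:: 0%Z; - (i.+1)%:Z] Hth) Ht T HtT).
    have r2 : rep d 1 (Lg - 3) M (realize (Phig d eps)) := rep_pnet hSgM hLg.
    apply: rep_deepen (hD1 n0) (rep_ext (rep_comp r1 r2) _) => x.
    by rewrite Hg2 cst1_sc.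
  have RB : forall l : 'I_n0, rep d 1 (kk n0) (\sum_(i < (m ^ (n0 - l))%N) (WW l + WW l))%N
      (fun x => cst1 ((T - t) / (m ^ (n0 - l))%:R *
          \sum_(i < m ^ (n0 - l))
            (let th1 := th ++ [:: l%:Z; (i.+1)%:Z] in
             let th2 := th ++ [:: - l%:Z; (i.+1)%:Z] in
             let tau := t + (T - t) * tt th1 omega in
             let y := X d eps th1 t x omega tau in
             f eps (U d eps th1 l%:Z m%:Z tau y omega)
             - indN l * f eps (U d eps th2 (l%:Z - 1) m%:Z tau y omega)))).
    move=> l.
    apply: rep_ext (rep_post ((T - t) / (m ^ (n0 - l))%:R)%:M 0 (rep_sum _)) _; last first.
      by move=> x; rewrite mul_scalar_mx addr0 cst1M cst1_sum.
    move=> i.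
    pose th1 := th ++ [:: l%:Z; (i.+1)%:Z].
    pose th2 := th ++ [:: - l%:Z; (i.+1)%:Z].
    pose tau := t + (T - t) * tt th1 omega.
    have Htau : t <= tau <= T by apply: tau_bounds.
    apply: rep_ext (rep_lin 1 (-1) (Hcomp l th1 th1 tau (WW l) (ltn_ord l) (hThApp _ _ Hth) (hThApp _ _ Hth) Htau (leqnn _))
                          (R2gen l th1 th2 tau (ltn_ord l) (hThApp _ _ Hth) (hThApp _ _ Hth) Htau)) _ => x.
    by rewrite scale1r scaleN1r -cst1B.
  have RT := rep_add (rep_post ((indN n0 / (m ^ n0)%:R)%:M) 0 RA) (rep_sum RB).
  have -> : WW n0 = (\sum_(i < (m ^ n0)%N) M + \sum_(l < n0) \sum_(i < (m ^ (n0 - l))%N) (WW l + WW l))%N.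
    by rewrite /WW width_sum.
  apply: rep_ext RT _ => x.
  rewrite HU // mul_scalar_mx addr0 cst1D cst1M !cst1_sum.
  by [].
have Hex : forall t th, exists N : unet d 1 (WW n),
    (0 <= t <= T -> inTheta th ->
     size N.1.2 = kk n /\ forall x, ueval N x = cst1 (U d eps th n%:Z m%:Z t x omega)).
  move=> t th.
  case: (boolP (0 <= t <= T)) => Ht; last by exists ((0, 0), [::], (0, 0)) => h; case/negP: Ht.
  case: (boolP (1 <= size th)%N) => Hth; last by exists ((0, 0), [::], (0, 0)) => _ h; case/negP: Hth.
  have [N [HN1 HN2]] := Main n t th Ht Hth.
  by exists N.
pose N t th := proj1_sig (constructive_indefinite_description _ (Hex t th)).
have HN : forall t th, 0 <= t <= T -> inTheta th ->
    size (N t th).1.2 = kk n /\ forall x, ueval (N t th) x = cst1 (U d eps th n%:Z m%:Z t x omega).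
  by move=> t th; exact: (proj2_sig (constructive_indefinite_description _ (Hex t th))).
have hd1 : (1 <= d)%N by [].
have hWn : (1 <= WW n)%N.
  apply: leq_trans (hMW n); apply: leq_trans hEM; apply: leq_trans hEd.
  exact: leq_trans hd1 (leq_addr _ _).
exists (fun t th => topnet (N t th)).
split.
  move=> t th Ht Hth; have [h1 _] := HN t th Ht Hth.
  rewrite /isANN dims_topnet /= size_cat size_nseq /= addn1 ltnS ltnS ltnS leq0n /=.
  rewrite hd1 /= all_cat all_nseq hWn orbT /=.
  by [].
split.
  move=> t1 t2 th1 th2 Ht1 Ht2 Hth1 Hth2.
  by rewrite !dims_topnet (HN _ _ Ht1 Hth1).1 (HN _ _ Ht2 Hth2).1.
split.
  move=> t th Ht Hth.
  rewrite dims_topnet /= size_cat size_nseq (HN _ _ Ht Hth).1 /=.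
  exact: arith_size.
split.
  move=> t th Ht Hth.
  have Hs : (supn (dims (topnet (N t th))) <= WW n)%N.
    apply: supn_le => k; rewrite dims_topnet inE mem_cat mem_nseq !inE.
    case/orP => [/eqP ->|/orP [/andP [_ /eqP ->]|/eqP ->]] //.
    apply: leq_trans (hMW n); apply: leq_trans hEM; apply: leq_trans hEd.
    exact: leq_addr.
  apply: le_trans (_ : (WW n)%:R <= _); first by rewrite ler_nat.
  rewrite /WW natrM natrX natrM.
  apply: ler_wpM2r; first by rewrite exprn_ge0 // mulr_ge0 // ler0n.
  have := Hc d eps Hd Heps.
  rewrite /M /E !natrD -/Sf -/Sg -/Sb -/Ss -/SF.
  move=> h; apply: le_trans h; rewrite -mulr2n -mulr_natl. lra.
move=> t th x Ht Hth.
by rewrite realize_topnet (HN _ _ Ht Hth).2 sc_cst1.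
Qed.
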